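(* Let $X$ be a real normed linear space which admits a predual ${}^*X$ (a normed space with $({}^*X)^* \simeq X$), and let $S \subset X$ be a closed subspace. Then the statement ''for every $y \in X$, the infimum $\inf_{x \in S} \|y - x\|$ is attained by some $x\in S$ and \[ \min_{x \in S} \|y - x\| \;=\; \sup_{\substack{\nu \in {}^\perp S \\ \|\nu\| \leq 1}} \langle \nu, y\rangle\text{''} \] holds if and only if $({}^\perp S)^\perp = S$.
   Context: A predual of a normed space $X$ is a normed space ${}^*X$ with $({}^*X)^* \simeq X$; via this isomorphism every $x \in X$ acts on ${}^*X$, with pairing written $\langle \nu, x\rangle$ for $\nu \in {}^*X$, $x \in X$. For $S \subset X$, the pre-annihilator is ${}^\perp S = \{\nu \in {}^*X : \langle \nu, x\rangle = 0 \ \forall x \in S\}$, and for $T \subset {}^*X$ its annihilator is $T^\perp = \{x \in X : \langle \nu, x\rangle = 0 \ \forall \nu \in T\}$ (identifying $({}^*X)^*$ with $X$). One always has $S \subset ({}^\perp S)^\perp$. *)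

(* Defs.v *)
From HB Require Import structures.
From mathcomp Require Import all_boot all_order all_algebra.
From mathcomp Require Import all_classical all_reals all_analysis.
Set Implicit Arguments. Unset Strict Implicit. Unset Printing Implicit Defensive.
Import Order.TTheory GRing.Theory Num.Theory.
Import numFieldNormedType.Exports.
Local Open Scope classical_set_scope.
Local Open Scope ring_scope.

(* A predual of the real normed space X is a real normed space P together with
   a pairing  <nu, x> = pair nu x  realizing an isometric linear isomorphism
   X ~ P^* (continuous dual of P), x |-> <., x>. *)
Definition is_predual_pairing (R : realType) (X P : normedModType R)
    (pair : P -> X -> R) : Prop :=
  (forall x a (u v : P), pair (a *: u + v) x = a * pair u x + pair v x) /\
  (forall x, continuous (pair^~ x)) /\
  (forall nu a (x y : X), pair nu (a *: x + y) = a * pair nu x + pair nu y) /\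
  (forall f : P -> R,
      (forall a (u v : P), f (a *: u + v) = a * f u + f v) ->
      continuous f -> exists x, forall nu, f nu = pair nu x) /\
  (forall x, `|x| = sup [set `|pair nu x| | nu in [set nu : P | `|nu| <= 1]]).

Definition is_subspace (R : realType) (X : normedModType R) (S : set X) : Prop :=
  S 0 /\ (forall a (x y : X), S x -> S y -> S (a *: x + y)).

Definition preannihilator (R : realType) (X P : normedModType R)
    (pair : P -> X -> R) (S : set X) : set P :=
  [set nu | forall x, S x -> pair nu x = 0].

Definition annihilator (R : realType) (X P : normedModType R)
    (pair : P -> X -> R) (T : set P) : set X :=
  [set x | forall nu, T nu -> pair nu x = 0].

(* Main.v *)
Require Import Defs.
From HB Require Import structures.
From mathcomp Require Import all_boot all_order all_algebra.
From mathcomp Require Import all_classical all_reals all_analysis.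
From mathcomp Require Import ring lra.
Import Order.TTheory GRing.Theory Num.Theory.
Import numFieldNormedType.Exports.
Local Open Scope classical_set_scope.
Local Open Scope ring_scope.
Set Implicit Arguments. Unset Strict Implicit. Unset Printing Implicit Defensive.
Lemma lin_facts (R : realType) (V : lmodType R) (h : V -> R) :
  (forall a u v, h (a *: u + v) = a * h u + h v) ->
  [/\ h 0 = 0, (forall u v, h (u + v) = h u + h v),
      (forall a u, h (a *: u) = a * h u) & (forall u, h (- u) = - h u)].
Proof.
move=> hl.
have h0 : h 0 = 0.
  have E := hl 1 0 0; rewrite scale1r addr0 mul1r in E; lra.
split=> //.
- by move=> u v; rewrite -[u]scale1r hl mul1r scale1r.
- by move=> a u; rewrite -[a *: u]addr0 hl h0 addr0.
- by move=> u; rewrite -scaleN1r -[_ *: u]addr0 hl h0 addr0 mulN1r.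
Qed.

Lemma addr_swap (V : zmodType) (a b c d : V) : a + b = c + d -> a - c = d - b.
Proof.
move=> h.
by rewrite -[a](addrK b) h addrAC [c + d]addrC addrK.
Qed.

Definition goodG (R : realType) (P : lmodType R) (p : P -> R) (H : set (P * R)) :=
  [/\ (forall u a b, H (u, a) -> H (u, b) -> a = b),
      (forall t u a v b, H (u, a) -> H (v, b) -> H (t *: u + v, t * a + b)) &
      (forall u a, H (u, a) -> a <= p u)].

Definition extG (R : realType) (P : lmodType R) (H : set (P * R)) (w : P) (al : R) :
  set (P * R) :=
  [set z | exists t u a, H (u, a) /\ z.1 = t *: w + u /\ z.2 = t * al + a].

Lemma ext_good (R : realType) (P : lmodType R) (p : P -> R)
  (psub : forall u v, p (u + v) <= p u + p v)
  (phom : forall t u, 0 < t -> p (t *: u) = t * p u)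
  (H : set (P * R)) (w : P) :
  goodG p H -> H (0, 0) -> ~ (exists a, H (w, a)) ->
  exists al, goodG p (extG H w al).
Proof.
move=> [Hf Hc Hd] H00 Hw.
pose E := [set r | exists u a, H (u, a) /\ r = a - p (u - w)].
have key u a v b : H (u, a) -> H (v, b) -> a - p (u - w) <= p (v + w) - b.
  move=> Hua Hvb.
  have := Hd _ _ (Hc 1 _ _ _ _ Hua Hvb); rewrite scale1r mul1r => h.
  have := psub (u - w) (v + w).
  rewrite addrACA addNr addr0 => h'; lra.
have Ene : E !=set0 by exists (0 - p (0 - w)); exists 0, 0.
have Eub : ubound E (p (0 + w) - 0).
  by move=> r [u [a [Hua ->]]]; exact: key Hua H00.
have alge u a : H (u, a) -> a - p (u - w) <= sup E.
  move=> Hua; apply: (sup_upper_bound (conj Ene (ex_intro _ _ Eub))).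
  by exists u, a.
have alle v b : H (v, b) -> sup E <= p (v + w) - b.
  move=> Hvb; have := @ge_sup R E (p (v + w) - b) Ene; apply => r [u [a [Hua ->]]].
  exact: key Hua Hvb.
exists (sup E); split.
- move=> x c1 c2 [t [u [a [Hua [/= ex ec1]]]]] [t' [u' [a' [Hua' [/= ex' ec2]]]]].
  rewrite ec1 ec2.
  have e : t *: w + u = t' *: w + u' by rewrite -ex -ex'.
  have [tt|tt] := eqVneq t t'.
    subst t'; have uu : u = u' by apply: (addrI (t *: w)).
    subst u'; by rewrite (Hf _ _ _ Hua Hua').
  exfalso; apply: Hw.
  have e2 : (t - t') *: w = u' - u by rewrite scalerBl; exact: addr_swap.
  have H1 := Hc (-1) _ _ _ _ Hua Hua'.
  rewrite scaleN1r mulN1r (addrC (- u)) (addrC (- a)) in H1.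
  have H2 := Hc (t - t')^-1 _ _ _ _ H1 H00.
  rewrite !addr0 -e2 scalerA mulVf ?scale1r in H2; last by rewrite subr_eq0.
  by exists ((t - t')^-1 * (a' - a)).
- move=> s x c y d [t [u [a [Hua [/= -> ->]]]]] [t' [u' [a' [Hua' [/= -> ->]]]]].
  exists (s * t + t'), (s *: u + u'), (s * a + a'); split; first exact: Hc.
  split => /=; last by ring.
  by rewrite scalerDr scalerA addrACA scalerDl.
- move=> x c [t [u [a [Hua [/= -> ->]]]]].
  have [t0|t0|->] := ltgtP t 0; last by rewrite scale0r add0r mul0r add0r; exact: Hd.
  + have s0 : 0 < - t by rewrite oppr_gt0.
    have Hvb := Hc (- t)^-1 _ _ _ _ Hua H00.
    rewrite !addr0 in Hvb.
    have h1 := alge _ _ Hvb.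
    have h2 : - t * ((- t)^-1 * a - p ((- t)^-1 *: u - w)) <= - t * sup E.
      by rewrite ler_pM2l.
    rewrite mulrBr -phom // mulVKf ?gt_eqF // scalerBr scalerA mulfV ?gt_eqF //
      scale1r scaleNr opprK in h2.
    rewrite [t *: w + u]addrC; lra.
  + have Hvb := Hc t^-1 _ _ _ _ Hua H00.
    rewrite !addr0 in Hvb.
    have h1 := alle _ _ Hvb.
    have h2 : t * sup E <= t * (p (t^-1 *: u + w) - t^-1 * a).
      by rewrite ler_pM2l.
    rewrite mulrBr -phom // mulVKf ?gt_eqF // scalerDr scalerA mulfV ?gt_eqF //
      scale1r in h2.
    rewrite [t *: w + u]addrC; lra.
Qed.

Lemma chain_good (R : realType) (P : lmodType R) (p : P -> R)
  (G0 : set (P * R)) (F : set (set (P * R))) :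
  goodG p G0 -> (forall X, F X -> goodG p (X `|` G0)) -> total_on F subset ->
  goodG p ((\bigcup_(X in F) X) `|` G0).
Proof.
move=> g0 gF tot.
set U := _ `|` G0.
have sub X : F X -> X `|` G0 `<=` U.
  by move=> FX z [Xz|Gz]; [left; exists X | right].
have claim z1 z2 : U z1 -> U z2 -> exists Y, [/\ goodG p Y, Y `<=` U, Y z1 & Y z2].
  case=> [[X FX Xz1]|G1]; case=> [[X' FX' Xz2]|G2].
  - have [XX'|X'X] := tot _ _ FX FX'.
    + exists (X' `|` G0); split; [exact: gF|exact: sub|left; exact: XX'|by left].
    + exists (X `|` G0); split; [exact: gF|exact: sub|by left|left; exact: X'X].
  - exists (X `|` G0); split; [exact: gF|exact: sub|by left|by right].
  - exists (X' `|` G0); split; [exact: gF|exact: sub|by right|by left].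
  - exists G0; split => //; by move=> z Gz; right.
split.
- move=> u a b Ha Hb; have [Y [[Yf _ _] _ Ya Yb]] := claim _ _ Ha Hb; exact: Yf Ya Yb.
- move=> t u a v b Ha Hb; have [Y [[_ Yc _] YU Ya Yb]] := claim _ _ Ha Hb.
  apply: YU; exact: Yc.
- move=> u a Ha; have [Y [[_ _ Yd] _ Ya _]] := claim _ _ Ha Ha; exact: Yd Ya.
Qed.

Lemma hahn_banach (R : realType) (P : lmodType R) (p : P -> R)
  (psub : forall u v, p (u + v) <= p u + p v)
  (phom : forall t u, 0 < t -> p (t *: u) = t * p u)
  (M : set P) (f : P -> R) :
  M 0 -> (forall a u v, M u -> M v -> M (a *: u + v)) ->
  (forall a u v, M u -> M v -> f (a *: u + v) = a * f u + f v) ->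
  (forall u, M u -> f u <= p u) ->
  exists g : P -> R, [/\ forall a u v, g (a *: u + v) = a * g u + g v,
     forall u, M u -> g u = f u & forall u, g u <= p u].
Proof.
move=> M0 Mc fl fd.
pose G0 := [set z : P * R | M z.1 /\ z.2 = f z.1].
have g0 : goodG p G0.
  split.
  - by move=> u a b [_ /= ->] [_ /= ->].
  - move=> t u a v b [Mu /= ->] [Mv /= ->]; split => /=; [exact: Mc | by rewrite fl].
  - by move=> u a [Mu /= ->]; exact: fd.
have [A [QA Amax]] := @Zorn_bigcup (P * R) [set A | goodG p (A `|` G0)]
  (fun F FQ tot => chain_good g0 FQ tot).
set H := A `|` G0 in QA.
have f0 : f 0 = 0 by have := fl 1 0 0 M0 M0; rewrite scale1r addr0 mul1r; lra.
have H00 : H (0, 0) by right; split => //=; rewrite f0.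
have tot w : exists a, H (w, a).
  apply: contrapT => nw.
  have [al gext] := ext_good psub phom QA H00 nw.
  apply: (Amax (extG H w al)).
  - split.
    + move=> [z1 z2] Az; exists 0, z1, z2; split; first by left.
      by rewrite /= scale0r add0r mul0r add0r.
    + move=> sub; apply: nw; exists al.
      have : extG H w al (w, al).
        by exists 1, 0, 0; split => //=; rewrite scale1r mul1r !addr0.
      by move/sub => Aw; left.
  - rewrite /= setUidl //.
    move=> z G0z; exists 0, z.1, z.2; split; first by right; case: z G0z.
    by rewrite scale0r add0r mul0r add0r.
have [g gH] := choice tot.
case: QA => Hf Hc Hd; exists g; split.
- by move=> a u v; apply: Hf (gH _) (Hc a _ _ _ _ (gH u) (gH v)).
- by move=> u Mu; apply: Hf (gH u) _; right.
- by move=> u; exact: Hd _ _ (gH u).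
Qed.

Lemma lin_cont (R : realType) (P : normedModType R) (g : P -> R) (c : R) :
  0 <= c -> (forall a u v, g (a *: u + v) = a * g u + g v) ->
  (forall u, `|g u| <= c * `|u|) -> continuous g.
Proof.
move=> c0 gl gb x; apply/cvgrPdist_lt => e e0.
have ec : 0 < e / (c + 1) by rewrite divr_gt0 // ltr_wpDl.
have h : \forall t \near x, `|x - t| < e / (c + 1).
  by apply: (@cvgr_dist_lt _ _ _ _ _ id); [exact: cvg_id | exact: ec].
move: h; apply: filterS => y /= hy.
have [_ gD _ gN] := lin_facts gl.
rewrite -gN -gD.
apply: le_lt_trans (gb _) _.
rewrite ltr_pdivlMr ?ltr_wpDl // in hy.
have := normr_ge0 (x - y); nra.
Qed.

Lemma pair_bound1 (R : realType) (X P : normedModType R) (pair : P -> X -> R) :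
  (forall nu a (x y : X), pair nu (a *: x + y) = a * pair nu x + pair nu y) ->
  (forall x, `|x| = sup [set `|pair nu x| | nu in [set nu : P | `|nu| <= 1]]) ->
  forall nu x, `|nu| <= 1 -> `|pair nu x| <= `|x|.
Proof.
move=> plx piso nu x hnu.
have [->|x0] := eqVneq x 0.
  by have [-> _ _ _] := lin_facts (plx nu); rewrite !normr0.
set E := [set `|pair nu x| | nu in [set nu : P | `|nu| <= 1]] in piso.
have Ene : E !=set0 by exists `|pair nu x|; exists nu.
have hs : has_ubound E.
  apply: contrapT => nub.
  have := piso x; rewrite sup_out; last by case.
  by move/eqP; rewrite normr_eq0 (negbTE x0).
rewrite piso; apply: (sup_upper_bound (conj Ene hs)).
by exists nu.
Qed.

Lemma pair_bound (R : realType) (X P : normedModType R) (pair : P -> X -> R) :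
  (forall x a (u v : P), pair (a *: u + v) x = a * pair u x + pair v x) ->
  (forall nu a (x y : X), pair nu (a *: x + y) = a * pair nu x + pair nu y) ->
  (forall x, `|x| = sup [set `|pair nu x| | nu in [set nu : P | `|nu| <= 1]]) ->
  forall nu x, `|pair nu x| <= `|nu| * `|x|.
Proof.
move=> pln plx piso nu x.
have [->|n0] := eqVneq nu 0.
  by have [-> _ _ _] := lin_facts (pln x); rewrite !normr0 mul0r.
have np : 0 < `|nu| by rewrite normr_gt0.
have h := pair_bound1 (nu := `|nu|^-1 *: nu) plx piso x.
have [_ _ hZ _] := lin_facts (pln x).
rewrite hZ normrM normrZ ger0_norm ?invr_ge0 // mulVf ?gt_eqF // in h.
have {}h := h (lexx _).
rewrite -(ler_pM2l np) mulVKf ?gt_eqF // in h.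
Qed.

Theorem theorem4 (R : realType) (X P : normedModType R) (pair : P -> X -> R)
  (hpre : is_predual_pairing pair) (S : set X)
  (hS : is_subspace S) (hcl : closed S) :
  (forall y : X, exists2 x0 : X, S x0 &
     (forall x, S x -> `|y - x0| <= `|y - x|) /\
     `|y - x0| = sup [set pair nu y | nu in
                      [set nu : P | preannihilator pair S nu /\ `|nu| <= 1]])
  <-> annihilator pair (preannihilator pair S) = S.
Proof.
have [pln [pcont [plx [psurj piso]]]] := hpre.
have pair0 x : pair 0 x = 0 by have [-> _ _ _] := lin_facts (pln x).
have pairx0 nu : pair nu 0 = 0 by have [-> _ _ _] := lin_facts (plx nu).
have pairB nu x y : pair nu (x - y) = pair nu x - pair nu y.
  by have [_ hD _ hN] := lin_facts (plx nu); rewrite hD hN.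
split.
- move=> hyp; apply/seteqP; split.
  + move=> y Ay; have [x0 Sx0 [_ hd]] := hyp y.
    have F0 : [set pair nu y | nu in
                [set nu : P | preannihilator pair S nu /\ `|nu| <= 1]] = [set 0].
      apply/seteqP; split.
      * by move=> r [nu [pnu _] <-]; exact: Ay nu pnu.
      * move=> r -> /=; exists 0 => //; split; last by rewrite normr0 ler01.
        by move=> x _; exact: pair0.
    rewrite F0 sup1 in hd.
    by move/eqP: hd; rewrite normr_eq0 subr_eq0 => /eqP ->.
  + by move=> x Sx nu pnu; exact: pnu x Sx.
- move=> hann y.
  set F := [set pair nu y | nu in _].
  set M := preannihilator pair S.
  have Fne : F !=set0 by exists 0; exists 0 => //; split; [move=> x _; exact: pair0|
    rewrite normr0 ler01].
  have Fub : ubound F `|y|.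
    move=> r [nu [_ hnu] <-].
    exact: le_trans (ler_norm _) (pair_bound1 plx piso _ hnu).
  have hasF : has_sup F by split => //; exists `|y|.
  set c := sup F.
  have c0 : 0 <= c.
    by apply: (sup_upper_bound hasF); exists 0 => //; split;
      [move=> x _; exact: pair0| rewrite normr0 ler01].
  have M0 : M 0 by move=> x _; exact: pair0.
  have Mc a u v : M u -> M v -> M (a *: u + v).
    by move=> Mu Mv x Sx; rewrite pln Mu // Mv // mulr0 addr0.
  have fl a u v : M u -> M v -> pair (a *: u + v) y = a * pair u y + pair v y.
    by move=> _ _; rewrite pln.
  have fd u : M u -> pair u y <= c * `|u|.
    move=> Mu.
    have [->|n0] := eqVneq u 0; first by rewrite pair0 normr0 mulr0.
    have np : 0 < `|u| by rewrite normr_gt0.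
    have hF : F (pair (`|u|^-1 *: u) y).
      exists (`|u|^-1 *: u) => //; split.
        move=> x Sx; rewrite -[_ *: u]addr0 pln Mu // mulr0 add0r.
        exact: pair0.
      by rewrite normrZ ger0_norm ?invr_ge0 // mulVf ?gt_eqF.
    have := sup_upper_bound hasF hF.
    rewrite -[_ *: u]addr0 pln pair0 addr0 -/c => h.
    rewrite -(ler_pM2l np) mulVKf ?gt_eqF // in h.
    by rewrite mulrC.
  have psub (u v : P) : c * `|u + v| <= c * `|u| + c * `|v|.
    by rewrite -mulrDr ler_wpM2l // ler_normD.
  have phom (t : R) (u : P) : 0 < t -> c * `|t *: u| = t * (c * `|u|).
    by move=> t0; rewrite normrZ gtr0_norm //; ring.
  have [g [gl gM gd]] := hahn_banach psub phom M0 Mc fl fd.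
  have [_ _ _ gN] := lin_facts gl.
  have gb u : `|g u| <= c * `|u|.
    rewrite ler_norml gd andbT lerNl -gN.
    by apply: le_trans (gd _) _; rewrite normrN.
  have [x1 hx1] := psurj g gl (lin_cont c0 gl gb).
  have nx1 : `|x1| <= c.
    rewrite piso; apply: ge_sup.
      by exists `|pair 0 x1|; exists 0 => //=; rewrite normr0 ler01.
    move=> r [nu hnu <-]; rewrite -hx1.
    apply: le_trans (gb _) _.
    by rewrite -[leRHS]mulr1 ler_wpM2l.
  have Sx0 : S (y - x1).
    rewrite -hann => nu Mnu.
    by rewrite pairB -hx1 gM // subrr.
  have cle x : S x -> c <= `|y - x|.
    move=> Sx; apply: ge_sup => // r [nu [Mnu hnu] <-].
    have -> : pair nu y = pair nu (y - x) by rewrite pairB (Mnu x Sx) subr0.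
    exact: le_trans (ler_norm _) (pair_bound1 plx piso _ hnu).
  have ey : y - (y - x1) = x1 by rewrite opprB addrC subrK.
  have ec : `|x1| = c by apply: le_anti; rewrite nx1 /= -{1}ey; exact: cle.
  exists (y - x1) => //; rewrite ey ec; split => // x Sx; exact: cle.
Qed.
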